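(* Let $S$ and $T$ be sets with $|T|\leq|S|$, let $\Phi_S$ be the full set of transition functions on $S$, and let $\Phi'_T$ be any set of transition functions on $T$. Then the machine $S\times\Phi_S$ is $T\times\Phi'_T$-complete.
   Context: For a set $S$, a transition function on $S$ is a function $S\to S$; the full set $\Phi_S$ is the set of all such functions. A machine $S\times\Phi'_S$ is a pair of a set $S$ and a subset $\Phi'_S\subseteq\Phi_S$. Isomorphism: $S\times\Phi'_S$ and $T\times\Phi'_T$ are isomorphic iff $|S|=|T|$, $|\Phi'_S|=|\Phi'_T|$, and there exist bijections $g:S\to T$, $h:\Phi'_S\to\Phi'_T$ with $g(\varphi(s))=h(\varphi)(g(s))$ for all $s\in S$, $\varphi\in\Phi'_S$. Functional reduction: $S\times\Phi'_2$ is a functional reduction of $S\times\Phi'_1$ iff $\Phi'_2\subseteq\Phi'_1$. State reduction: $S'\times\Phi'_{S'}$ is a state reduction of $S\times\Phi'_S$ iff (1) $S'\subseteq S$; (2) every $\varphi'\in\Phi'_{S'}$ agrees on $S'$ with some $\varphi\in\Phi'_S$; (3) for every $\varphi\in\Phi'_S$ with $\varphi(S')\subseteq S'$ there is $\varphi'\in\Phi'_{S'}$ agreeing with $\varphi$ on $S'$. A machine $B$ is a sub-machine of $A$ iff $B$ is obtained from $A$ by a functional reduction followed by a state reduction. A machine $S\times\Phi'_S$ is $T\times\Phi'_T$-complete if some sub-machine of $S\times\Phi'_S$ is isomorphic to $T\times\Phi'_T$. *)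

(* Defs.v *)
(** A machine: carrier type [S] and a set [P] of transition functions S -> S. *)
Record machine := Machine { mstate : Type ; mfun : (mstate -> mstate) -> Prop }.

Definition bijection {X Y : Type} (f : X -> Y) : Prop :=
  exists g : Y -> X, (forall x, g (f x) = x) /\ (forall y, f (g y) = y).

Definition card_le (T S : Type) : Prop :=
  exists f : T -> S, forall x y, f x = f y -> x = y.

(** Isomorphism of machines: bijections g on states and h on the transition
    sets with g (phi s) = h phi (g s).  (The cardinality equalities of the
    definition are implied by the existence of these bijections.) *)
Definition machine_iso (A B : machine) : Prop :=
  exists (g : mstate A -> mstate B)
         (h : {phi : mstate A -> mstate A | mfun A phi} ->
              {psi : mstate B -> mstate B | mfun B psi}),
    bijection g /\ bijection h /\
    forall (s : mstate A) (phi : {phi : mstate A -> mstate A | mfun A phi}),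
      g (proj1_sig phi s) = proj1_sig (h phi) (g s).

Definition functional_reduction {S : Type} (P2 P1 : (S -> S) -> Prop) : Prop :=
  forall phi, P2 phi -> P1 phi.

(** State reduction of (S, P): the subset S' is given by a predicate [A] on S,
    the reduced machine has carrier {s | A s} and transition set [Q]. *)
Definition state_reduction {S : Type} (P : (S -> S) -> Prop) (A : S -> Prop)
    (Q : ({s : S | A s} -> {s : S | A s}) -> Prop) : Prop :=
  (forall phi', Q phi' ->
     exists phi, P phi /\ forall x : {s : S | A s}, proj1_sig (phi' x) = phi (proj1_sig x)) /\
  (forall phi, P phi -> (forall s, A s -> A (phi s)) ->
     exists phi', Q phi' /\ forall x : {s : S | A s}, proj1_sig (phi' x) = phi (proj1_sig x)).

(** B is a sub-machine of (S, P): a functional reduction followed by a state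
    reduction.  Since the carrier of a state reduction is a subset of S,
    sub-machines are described by (P2, A, Q). *)
Definition sub_machine {S : Type} (P : (S -> S) -> Prop) (B : machine) : Prop :=
  exists (P2 : (S -> S) -> Prop) (A : S -> Prop)
         (Q : ({s : S | A s} -> {s : S | A s}) -> Prop),
    functional_reduction P2 P /\ state_reduction P2 A Q /\
    machine_iso (Machine {s : S | A s} Q) B.

Definition complete {S : Type} (P : (S -> S) -> Prop) (B : machine) : Prop :=
  sub_machine P B.

Definition full_fun (S : Type) : (S -> S) -> Prop := fun _ => True.

(* Main.v *)
Require Import Defs.
From Stdlib Require Import Classical ClassicalEpsilon FunctionalExtensionality ProofIrrelevance.

Theorem theorem9 (S T : Type) (PhiT : (T -> T) -> Prop) :
  card_le T S -> complete (full_fun S) (Machine T PhiT).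
Proof.
  intros [f finj].
  set (A := fun s : S => exists t, f t = s).
  set (inv := fun x : {s | A s} => proj1_sig (constructive_indefinite_description _ (proj2_sig x))).
  assert (Hinv : forall x, f (inv x) = proj1_sig x).
  { intro x. unfold inv. exact (proj2_sig (constructive_indefinite_description _ (proj2_sig x))). }
  set (emb := fun t : T => exist A (f t) (ex_intro _ t eq_refl)).
  assert (Hie : forall t, inv (emb t) = t).
  { intro t. apply finj. rewrite Hinv. reflexivity. }
  assert (Hei : forall x, emb (inv x) = x).
  { intros [s p]. unfold emb. apply eq_sig_hprop.
    - intros; apply proof_irrelevance.
    - simpl. rewrite Hinv. reflexivity. }
  set (ext := fun psi : T -> T => fun s : S =>
     match excluded_middle_informative (A s) with
     | left p => f (psi (inv (exist A s p)))
     | right _ => s end).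
  assert (Hext : forall psi t, ext psi (f t) = f (psi t)).
  { intros psi t. unfold ext. destruct (excluded_middle_informative (A (f t))) as [p|n].
    - f_equal. f_equal. apply finj. rewrite Hinv. reflexivity.
    - exfalso. apply n. exists t. reflexivity. }
  exists (fun phi => exists psi, PhiT psi /\ forall t, phi (f t) = f (psi t)).
  exists A.
  exists (fun phi' => exists psi, PhiT psi /\ forall x, proj1_sig (phi' x) = f (psi (inv x))).
  split; [intros ? ?; exact I|].
  split; [split|].
  - intros phi' [psi [Hp Hq]]. exists (ext psi). split.
    + exists psi. split; [exact Hp| apply Hext].
    + intro x. rewrite Hq. transitivity (ext psi (f (inv x))); [rewrite Hext; reflexivity| rewrite Hinv; reflexivity].
  - intros phi [psi [Hp Hq]] Hcl.
    exists (fun x => exist A (phi (proj1_sig x)) (Hcl _ (proj2_sig x))). split.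
    + exists psi. split; [exact Hp|]. intro x. simpl. rewrite <- Hinv. apply Hq.
    + intro x. reflexivity.
  - unfold machine_iso. simpl.
    set (Q := fun phi' : {s | A s} -> {s | A s} =>
           exists psi, PhiT psi /\ forall x, proj1_sig (phi' x) = f (psi (inv x))).
    assert (HQ : forall phi' : {phi' | Q phi'},
               PhiT (fun t => inv (proj1_sig phi' (emb t)))).
    { intros [phi' [psi [Hp Hq]]]. simpl.
      replace (fun t => inv (phi' (emb t))) with psi; [exact Hp|].
      apply functional_extensionality. intro t. apply finj.
      rewrite Hinv, Hq, Hie. reflexivity. }
    exists inv.
    exists (fun phi' => exist PhiT _ (HQ phi')).
    split; [|split].
    + exists emb. split; [exact Hei|exact Hie].
    + assert (HK : forall psi : {psi | PhiT psi},
                 Q (fun x => emb (proj1_sig psi (inv x)))).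
      { intros [psi Hp]. exists psi. split; [exact Hp|]. intro x. reflexivity. }
      exists (fun psi => exist Q _ (HK psi)). split.
      * intros [phi' Hq]. apply eq_sig_hprop; [intros; apply proof_irrelevance|].
        simpl. apply functional_extensionality. intro x.
        rewrite Hei. rewrite Hei. reflexivity.
      * intros [psi Hp]. apply eq_sig_hprop; [intros; apply proof_irrelevance|].
        simpl. apply functional_extensionality. intro t.
        rewrite Hie. rewrite Hie. reflexivity.
    + intros s [phi' Hq]. simpl. rewrite Hei. reflexivity.
Qed.
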